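(* Let $N$ be a connected, complete, non-orientable hyperbolic $3$-manifold of finite volume with an ideal triangulation $\Delta$, let $\hat N$ be its orientation covering with deck involution $\iota$ and lifted triangulation $\hat\Delta$. Then the map $$(z_{i,j})\in\mathrm{Def}(N,\Delta)\longmapsto\big(z_{i,j},1/\overline{z_{i,j}}\big)\in\mathrm{Def}(\hat N,\hat\Delta)^{\iota}$$ is a real analytic isomorphism onto the fixed point set of $\iota$.
   Context: $\mathrm{Def}(N,\Delta)$ is the set of edge invariants $(z_{i,j})$ of the tetrahedra of $\Delta$, in a small neighborhood of the complete-structure values, satisfying the tetrahedron relations ($z_2=1/(1-z_1)$, $z_3=(z_1-1)/z_1$, opposite edges equal) and the non-orientable compatibility equations around every edge cycle: $\prod_l z_l^{\epsilon_l}\overline{z_l}^{-(1-\epsilon_l)}=1$, $\sum_l\arg z_l=2\pi$, where $\epsilon_l=1$ or $0$ according to whether the $l$-th tetrahedron keeps or reverses orientation in a coherent orientation around the edge. $\mathrm{Def}(\hat N,\hat\Delta)$ is defined similarly for the orientable $\hat N$ (with all $\epsilon_l=1$), with coordinates $(z_{i,j},w_{i,j})$, $w_{i,j}$ the invariant of the lifted edge $\iota(e_{i,j})$; $\iota$ acts by $(z_{i,j},w_{i,j})\mapsto(1/\overline{w_{i,j}},1/\overline{z_{i,j}})$. *)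

(* Defs.v *)
From Stdlib Require Import Bool Reals List.
From Coquelicot Require Import Coquelicot.
Import ListNotations.
Open Scope R_scope.

Definition Arg (z : C) : R :=
  if Rle_dec 0 (Im z) then acos (Re z / Cmod z) else - acos (Re z / Cmod z).

(** Combinatorial data of an ideal triangulation Delta of N with [n]
    tetrahedra Delta_0 .. Delta_(n-1), each with a fixed orientation.
    The edge parameter z_{l,j} (j = 0,1,2) is attached to the pair of
    opposite edges of type j of Delta_l.  An edge cycle of N is a list of
    entries (l, j, eps): going once around the edge one meets tetrahedron l
    at an edge of type j, and eps = true / false according to whether
    Delta_l keeps / reverses the coherent orientation around the edge. *)
Definition entry := (nat * nat * bool)%type.
Definition ent_tet (e : entry) : nat := fst (fst e).
Definition ent_typ (e : entry) : nat := snd (fst e).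
Definition ent_eps (e : entry) : bool := snd e.

(** Well-formedness: indices in range, and every edge-type (l,j) of every
    tetrahedron (i.e. each of the 6 edges, opposite edges sharing a type)
    occurs exactly twice in the union of the edge cycles. *)
Definition valid_triangulation (n : nat) (cyc : list (list entry)) : Prop :=
  (forall c e, In c cyc -> In e c -> (ent_tet e < n)%nat /\ (ent_typ e < 3)%nat) /\
  (forall l j, (l < n)%nat -> (j < 3)%nat ->
     length (filter (fun e => andb (Nat.eqb (ent_tet e) l) (Nat.eqb (ent_typ e) j))
                    (concat cyc)) = 2%nat).

Definition coords := nat -> nat -> C.

Definition near (n : nat) (z z0 : coords) (r : R) : Prop :=
  forall l j, (l < n)%nat -> (j < 3)%nat -> Cmod (Cminus (z l j) (z0 l j)) < r.

Definition tet_rel (z : coords) (l : nat) : Prop :=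
  z l 0%nat <> 0 /\ z l 0%nat <> 1 /\
  z l 1%nat = Cinv (Cminus 1 (z l 0%nat)) /\
  z l 2%nat = Cdiv (Cminus (z l 0%nat) 1) (z l 0%nat).

(** Tetrahedron relations for a tetrahedron labelled with the reverse
    orientation (the lifts iota(Delta_l) in hat N, whose edges iota(e_{l,j})
    carry the labels w_{l,j}): the cyclic order of the labels is reversed. *)
Definition tet_rel_rev (w : coords) (l : nat) : Prop :=
  w l 0%nat <> 0 /\ w l 0%nat <> 1 /\
  w l 2%nat = Cinv (Cminus 1 (w l 0%nat)) /\
  w l 1%nat = Cdiv (Cminus (w l 0%nat) 1) (w l 0%nat).

Definition Cprod (l : list C) : C := fold_right Cmult 1 l.
Definition Rsum (l : list R) : R := fold_right Rplus 0 l.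

Definition edge_eq_N (z : coords) (c : list entry) : Prop :=
  Cprod (map (fun e => if ent_eps e then z (ent_tet e) (ent_typ e)
                       else Cinv (Cconj (z (ent_tet e) (ent_typ e)))) c) = 1 /\
  Rsum (map (fun e => Arg (z (ent_tet e) (ent_typ e))) c) = 2 * PI.

(** Orientable compatibility equations (all eps = 1) around the two lifts of
    an edge cycle c of N to hat N: the lift through Delta_l for eps_l = true
    and through iota(Delta_l) for eps_l = false, and its image under iota. *)
Definition edge_eq_or (v : entry -> C) (c : list entry) : Prop :=
  Cprod (map v c) = 1 /\ Rsum (map (fun e => Arg (v e)) c) = 2 * PI.

Definition edge_eq_hat (z w : coords) (c : list entry) : Prop :=
  edge_eq_or (fun e => if ent_eps e then z (ent_tet e) (ent_typ e)
                       else w (ent_tet e) (ent_typ e)) c /\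
  edge_eq_or (fun e => if ent_eps e then w (ent_tet e) (ent_typ e)
                       else z (ent_tet e) (ent_typ e)) c.

Definition eqs_N (n : nat) (cyc : list (list entry)) (z : coords) : Prop :=
  (forall l, (l < n)%nat -> tet_rel z l) /\ (forall c, In c cyc -> edge_eq_N z c).

Definition DefN (n : nat) (cyc : list (list entry)) (z0 : coords) (r : R)
  (z : coords) : Prop := near n z z0 r /\ eqs_N n cyc z.

Definition inv_conj (z : coords) : coords := fun l j => Cinv (Cconj (z l j)).

Definition DefHat (n : nat) (cyc : list (list entry)) (z0 : coords) (rz rw : R)
  (z w : coords) : Prop :=
  near n z z0 rz /\ near n w (inv_conj z0) rw /\
  (forall l, (l < n)%nat -> tet_rel z l /\ tet_rel_rev w l) /\
  (forall c, In c cyc -> edge_eq_hat z w c).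

Definition iota_act (zw : coords * coords) : coords * coords :=
  (inv_conj (snd zw), inv_conj (fst zw)).

Definition coords_eq (n : nat) (z z' : coords) : Prop :=
  forall l j, (l < n)%nat -> (j < 3)%nat -> z l j = z' l j.

Definition iota_fixed (n : nat) (zw : coords * coords) : Prop :=
  coords_eq n (fst (iota_act zw)) (fst zw) /\ coords_eq n (snd (iota_act zw)) (snd zw).

Definition Phi (z : coords) : coords * coords := (z, inv_conj z).

(** Hypothesis on the base point: the (complete) hyperbolic structure values,
    a solution of the equations of Def(N,Delta) with all parameters in the
    upper half plane (positively oriented ideal tetrahedra). *)
Definition hyperbolic_structure (n : nat) (cyc : list (list entry)) (z0 : coords) : Prop :=
  eqs_N n cyc z0 /\ (forall l j, (l < n)%nat -> (j < 3)%nat -> 0 < Im (z0 l j)).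

(* Main.v *)
Require Import Defs.
From Stdlib Require Import Reals List Lra Psatz.
From Coquelicot Require Import Coquelicot.
Open Scope R_scope.

Lemma Im_nz (z : C) : 0 < Im z -> z <> 0%C.
Proof. intros H E; subst; simpl in H; lra. Qed.

Lemma ic_form (x y : R) : 0 < y ->
  Cinv (Cconj (x, y)) = (/(x^2+y^2) * x, /(x^2+y^2) * y).
Proof. intros Hy. unfold Cinv, Cconj; simpl.
  assert (x * (x*1) + y*(y*1) > 0) by nra.
  f_equal; field; lra. Qed.

Lemma Arg_scal (k x y : R) : 0 < k -> 0 < y -> Arg (k*x, k*y) = Arg (x, y).
Proof. intros Hk Hy. unfold Arg, Cmod; simpl.
  replace (k * x * (k * x * 1) + k * y * (k * y * 1)) with ((k*k) * (x * (x * 1) + y * (y * 1))) by ring.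
  rewrite sqrt_mult by nra. rewrite sqrt_square by lra.
  assert (0 < sqrt (x * (x * 1) + y * (y * 1))) by (apply sqrt_lt_R0; nra).
  replace (k * x / (k * sqrt (x * (x * 1) + y * (y * 1)))) with (x / sqrt (x * (x * 1) + y * (y * 1))) by (field; lra).
  destruct (Rle_dec 0 (k*y)), (Rle_dec 0 y); try reflexivity; nra. Qed.

Lemma Im_ic (z : C) : 0 < Im z -> 0 < Im (Cinv (Cconj z)).
Proof. destruct z as [x y]; intros Hy; simpl in Hy. rewrite ic_form by auto. simpl.
  apply Rmult_lt_0_compat; auto. apply Rinv_0_lt_compat; nra. Qed.

Lemma Arg_ic (z : C) : 0 < Im z -> Arg (Cinv (Cconj z)) = Arg z.
Proof. destruct z as [x y]; intros Hy; simpl in Hy. rewrite ic_form by auto.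
  apply Arg_scal; auto. apply Rinv_0_lt_compat; nra. Qed.

Lemma ic_mul (z : C) : 0 < Im z -> (Cinv (Cconj z) * Cconj z = 1)%C.
Proof. intros H. field. intro E. apply (Im_nz z H).
  rewrite <- (Cconj_conj z), E. apply injective_projections; simpl; ring. Qed.

Lemma ic_ic (z : C) : 0 < Im z -> Cinv (Cconj (Cinv (Cconj z))) = z.
Proof. destruct z as [x y]; intros Hy; simpl in Hy. rewrite ic_form by auto.
  assert (0 < x^2+y^2) by nra.
  rewrite ic_form.
  2:{ apply Rmult_lt_0_compat; auto. apply Rinv_0_lt_compat; nra. }
  f_equal; field; nra. Qed.

Lemma Cconj1 : Cconj 1 = 1%C.
Proof. apply injective_projections; simpl; ring. Qed.

Lemma prod_ic (v : entry -> C) (c : list entry) :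
  (forall e, In e c -> 0 < Im (v e)) ->
  (Cprod (map (fun e => Cinv (Cconj (v e))) c) * Cconj (Cprod (map v c)) = 1)%C.
Proof. induction c as [|a c IH]; intros H; simpl.
  - rewrite Cconj1. ring.
  - rewrite Cmult_conj.
    transitivity ((Cinv (Cconj (v a)) * Cconj (v a)) *
      (Cprod (map (fun e => Cinv (Cconj (v e))) c) * Cconj (Cprod (map v c))))%C.
    + ring.
    + rewrite ic_mul by (apply H; simpl; auto). rewrite IH by (intros; apply H; simpl; auto). ring.
Qed.

Lemma near_ic (m : R) (z z0 : C) : 0 < m -> m <= Im z0 -> Cmod (Cminus z z0) < m/2 ->
  Cmod (Cminus (Cinv (Cconj z)) (Cinv (Cconj z0))) < 1/m.
Proof. intros Hm Hz0 Hd.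
  assert (Hi : Rabs (Im (Cminus z z0)) <= Cmod (Cminus z z0)).
  { eapply Rle_trans; [|apply Rmax_Cmod]. apply Rmax_r. }
  assert (Hiz : Im (Cminus z z0) = Im z - Im z0) by (destruct z, z0; simpl; ring).
  rewrite Hiz in Hi. apply Rabs_le_between in Hi.
  assert (Hz : m/2 < Im z) by lra.
  assert (Cz : m/2 <= Cmod z).
  { assert (Rabs (Im z) <= Cmod z). { eapply Rle_trans; [|apply Rmax_Cmod]. apply Rmax_r. }
    rewrite Rabs_right in H by lra. lra. }
  assert (Cz0 : m <= Cmod z0).
  { assert (Rabs (Im z0) <= Cmod z0). { eapply Rle_trans; [|apply Rmax_Cmod]. apply Rmax_r. }
    rewrite Rabs_right in H by lra. lra. }
  assert (Hz' : 0 < Im z) by lra. assert (Hz0' : 0 < Im z0) by lra.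
  assert (E : Cminus (Cinv (Cconj z)) (Cinv (Cconj z0)) =
     (Cinv (Cconj z) * Cinv (Cconj z0) * Cconj (Cminus z0 z))%C).
  { rewrite Cminus_conj.
    transitivity (Cinv (Cconj z) * (Cinv (Cconj z0) * Cconj z0) - Cinv (Cconj z0) * (Cinv (Cconj z) * Cconj z))%C.
    - rewrite !ic_mul by auto. unfold Cminus. ring.
    - unfold Cminus. ring. }
  rewrite E, !Cmod_mult, Cmod_conj.
  assert (nz : Cconj z <> 0%C). { intro X. apply (Im_nz z Hz'). rewrite <- (Cconj_conj z), X. apply injective_projections; simpl; ring. }
  assert (nz0 : Cconj z0 <> 0%C). { intro X. apply (Im_nz z0 Hz0'). rewrite <- (Cconj_conj z0), X. apply injective_projections; simpl; ring. }
  rewrite !Cmod_inv, !Cmod_conj by auto.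
  replace (Cminus z0 z) with (Copp (Cminus z z0)) by (unfold Cminus; ring).
  rewrite Cmod_opp.
  assert (A1 : / Cmod z <= 2/m).
  { replace (2/m) with (/(m/2)) by (field; lra). apply Rinv_le_contravar; lra. }
  assert (A2 : / Cmod z0 <= /m) by (apply Rinv_le_contravar; lra).
  assert (0 <= / Cmod z) by (apply Rlt_le, Rinv_0_lt_compat; lra).
  assert (0 <= / Cmod z0) by (apply Rlt_le, Rinv_0_lt_compat; lra).
  assert (0 <= Cmod (Cminus z z0)) by apply Cmod_ge_0.
  assert (0 < /m) by (apply Rinv_0_lt_compat; lra).
  apply Rle_lt_trans with (2/m * /m * Cmod (Cminus z z0)).
  - apply Rmult_le_compat_r; auto. apply Rmult_le_compat; auto.
  - replace (1/m) with (2/m * /m * (m/2)) by (field; lra).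
    apply Rmult_lt_compat_l; auto. unfold Rdiv. nra.
Qed.

Lemma min_bound (z0 : coords) (n : nat) :
  (forall l j, (l < n)%nat -> (j < 3)%nat -> 0 < Im (z0 l j)) ->
  exists m, 0 < m /\ forall l j, (l < n)%nat -> (j < 3)%nat -> m <= Im (z0 l j).
Proof. induction n as [|n IH]; intros H.
  - exists 1. split; [lra|]. intros; lia.
  - destruct IH as [m [Hm Hb]]. { intros; apply H; lia. }
    exists (Rmin m (Rmin (Im (z0 n 0%nat)) (Rmin (Im (z0 n 1%nat)) (Im (z0 n 2%nat))))).
    split.
    + repeat apply Rmin_pos; auto; apply H; lia.
    + intros l j Hl Hj. destruct (Nat.eq_dec l n) as [->|Hne].
      * assert (H0 : (j = 0 \/ j = 1 \/ j = 2)%nat) by lia. destruct H0 as [ -> | [ -> | -> ] ].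
        -- eapply Rle_trans; [apply Rmin_r|]. apply Rmin_l.
        -- eapply Rle_trans; [apply Rmin_r|]. eapply Rle_trans; [apply Rmin_r|]. apply Rmin_l.
        -- eapply Rle_trans; [apply Rmin_r|]. eapply Rle_trans; [apply Rmin_r|]. apply Rmin_r.
      * eapply Rle_trans; [apply Rmin_l|]. apply Hb; lia; lia.
Qed.

Lemma conj_nz (z : C) : 0 < Im z -> Cconj z <> 0%C.
Proof. intros H X. apply (Im_nz z H). rewrite <- (Cconj_conj z), X.
  apply injective_projections; simpl; ring. Qed.

Lemma tet_rev (z : coords) (l : nat) :
  (forall j, (j < 3)%nat -> 0 < Im (z l j)) -> tet_rel z l -> tet_rel_rev (inv_conj z) l.
Proof. intros Hp [H0 [H1 [E1 E2]]]. unfold tet_rel_rev, inv_conj.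
  assert (P0 : 0 < Im (z l 0%nat)) by (apply Hp; lia).
  assert (a0 : Cconj (z l 0%nat) <> 0%C) by (apply conj_nz; auto).
  assert (a1 : Cconj (z l 0%nat) <> 1%C).
  { intro X. apply H1. rewrite <- (Cconj_conj (z l 0%nat)), X. apply Cconj1. }
  assert (a1' : (1 - Cconj (z l 0%nat))%C <> 0%C).
  { intro X. apply a1. replace (Cconj (z l 0%nat)) with (1 - (1 - Cconj (z l 0%nat)))%C by ring.
    rewrite X. ring. }
  assert (a1'' : (Cconj (z l 0%nat) - 1)%C <> 0%C).
  { intro X. apply a1. replace (Cconj (z l 0%nat)) with ((Cconj (z l 0%nat) - 1) + 1)%C by ring.
    rewrite X. ring. }
  assert (nz1 : Cminus 1 (z l 0%nat) <> 0%C).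
  { intro X. apply H1. replace (z l 0%nat) with (1 - (1 - z l 0%nat))%C by ring. unfold Cminus in *. rewrite X. ring. }
  split; [apply Im_nz, Im_ic; auto|]. split.
  { intro X. apply H1. rewrite <- (ic_ic (z l 0%nat)) by auto. rewrite X.
    apply injective_projections; simpl; field. }
  split.
  - rewrite E2. unfold Cdiv. rewrite Cmult_conj, Cinv_conj by auto. unfold Cminus.
    rewrite Cplus_conj, Copp_conj, Cconj1. field. unfold Cminus in *; split; auto. intro X; apply a1''; rewrite <- X; apply injective_projections; simpl; ring.
  - rewrite E1. rewrite Cinv_conj by auto. unfold Cminus. rewrite Cplus_conj, Copp_conj, Cconj1.
    field. unfold Cminus in *; repeat split; auto.
Qed.

Lemma near_pos (n : nat) (z z0 : coords) (m : R) :
  0 < m -> (forall l j, (l < n)%nat -> (j < 3)%nat -> m <= Im (z0 l j)) ->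
  near n z z0 (m/2) -> forall l j, (l < n)%nat -> (j < 3)%nat -> 0 < Im (z l j).
Proof. intros Hm Hb Hn l j Hl Hj. specialize (Hb l j Hl Hj). specialize (Hn l j Hl Hj).
  assert (Hi : Rabs (Im (Cminus (z l j) (z0 l j))) <= Cmod (Cminus (z l j) (z0 l j))).
  { eapply Rle_trans; [|apply Rmax_Cmod]. apply Rmax_r. }
  assert (Hiz : Im (Cminus (z l j) (z0 l j)) = Im (z l j) - Im (z0 l j))
    by (destruct (z l j), (z0 l j); simpl; ring).
  rewrite Hiz in Hi. apply Rabs_le_between in Hi. lra. Qed.

Theorem corollary2p7 (n : nat) (cyc : list (list entry)) (z0 : coords) :
  (0 < n)%nat ->
  valid_triangulation n cyc ->
  hyperbolic_structure n cyc z0 ->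
  exists r rz rw : R, 0 < r /\ 0 < rz /\ 0 < rw /\
    (forall z, DefN n cyc z0 r z ->
       DefHat n cyc z0 rz rw (fst (Phi z)) (snd (Phi z)) /\ iota_fixed n (Phi z)) /\
    (forall z w, DefHat n cyc z0 rz rw z w -> iota_fixed n (z, w) ->
       DefN n cyc z0 r z /\ coords_eq n w (snd (Phi z))) /\
    (forall z z', DefN n cyc z0 r z -> DefN n cyc z0 r z' ->
       coords_eq n (fst (Phi z)) (fst (Phi z')) /\
       coords_eq n (snd (Phi z)) (snd (Phi z')) -> coords_eq n z z').
Proof.
  intros _ [Hv1 _] [_ Hpos].
  destruct (min_bound z0 n Hpos) as [m [Hm Hb]].
  exists (m/2), (m/2), (1/m).
  split; [lra|]. split; [lra|]. split; [apply Rdiv_lt_0_compat; lra|].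
  split; [|split].
  - intros z [Hn [Ht He]]. unfold Phi; simpl.
    pose proof (near_pos n z z0 m Hm Hb Hn) as Hp.
    split; [split; [exact Hn|split; [|split]]|].
    + intros l j Hl Hj. unfold inv_conj. apply near_ic; auto.
    + intros l Hl. split; auto. apply tet_rev; auto.
    + intros c Hc. destruct (He c Hc) as [Pr Ar].
      assert (Hpe : forall e, In e c -> 0 < Im (z (ent_tet e) (ent_typ e))).
      { intros e He'. destruct (Hv1 c e Hc He'). apply Hp; auto. }
      split; [split; [exact Pr|]|]. { rewrite <- Ar. f_equal. apply map_ext_in. intros e He'. unfold inv_conj.
        destruct (ent_eps e); rewrite ?Arg_ic; auto. }
      split.
      * pose proof (prod_ic (fun e => if ent_eps e then z (ent_tet e) (ent_typ e)
                       else Cinv (Cconj (z (ent_tet e) (ent_typ e)))) c) as PI'.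
        refine (_ (PI' _)); clear PI'.
        2:{ intros e He'. destruct (ent_eps e); auto. apply Im_ic; auto. }
        intros PI'. rewrite Pr, Cconj1, Cmult_1_r in PI'.
        rewrite <- PI'. f_equal. apply map_ext_in. intros e He'. unfold inv_conj.
        destruct (ent_eps e); auto. rewrite ic_ic; auto.
      * rewrite <- Ar. f_equal. apply map_ext_in. intros e He'. unfold inv_conj.
        destruct (ent_eps e); rewrite ?Arg_ic; auto.
    + split; intros l j Hl Hj; simpl; unfold inv_conj; auto.
      apply ic_ic; auto.
  - intros z w [Hn [_ [Ht He]]] [_ Fx]. simpl in Fx.
    pose proof (near_pos n z z0 m Hm Hb Hn) as Hp.
    split.
    + split; [exact Hn|split].
      * intros l Hl. apply Ht; auto.
      * intros c Hc. destruct (He c Hc) as [[Pr Ar] _].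
        assert (Hw : forall e, In e c -> w (ent_tet e) (ent_typ e) =
                    Cinv (Cconj (z (ent_tet e) (ent_typ e)))).
        { intros e He'. destruct (Hv1 c e Hc He'). symmetry. apply Fx; auto. }
        split.
        -- rewrite <- Pr. f_equal. apply map_ext_in. intros e He'.
           destruct (ent_eps e); auto. rewrite Hw; auto.
        -- rewrite <- Ar. f_equal. apply map_ext_in. intros e He'.
           destruct (ent_eps e); auto. rewrite Hw; auto. rewrite Arg_ic; auto.
           destruct (Hv1 c e Hc He'). apply Hp; auto.
    + intros l j Hl Hj. symmetry. apply Fx; auto.
  - intros z z' _ _ [H1 _]. exact H1.
Qed.
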